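(* Let triangle $ABC$ be inscribed in a circle $\Gamma$ with center $O$ and radius $R$, with $AB>BC$, and let $A,B,C$ also denote its angles at the respective vertices. Let $B'$ be the midpoint of the arc $CA$ of $\Gamma$ not containing $B$. Let the line through $B'$ perpendicular to $AB$ meet $\Gamma$ again at $E$, and let the line through $A$ perpendicular to $EA$ meet line $EB'$ at $F$. Then $FA=2R\sin\frac{C-A}{2}\tan\frac{B}{2}$. Moreover, for a point $D$ on the minor arc $CB'$, one has $AB+CD=BC+DA$ if and only if $DB'=2R\sin\frac{C-A}{2}\tan\frac{B}{2}$. Consequently the point $D$ on minor arc $CB'$ with $DB'=FA$ makes $ABCD$ a convex tangential (indeed bicentric) quadrilateral.
   Context: A convex quadrilateral $ABCD$ is tangential (has an incircle) iff $AB+CD=BC+DA$. *)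

(* Defs.v *)
From Stdlib Require Import Reals Lra.
Open Scope R_scope.

Definition point : Type := (R * R)%type.

Definition edist (P Q : point) : R :=
  sqrt ((fst P - fst Q) ^ 2 + (snd P - snd Q) ^ 2).

Definition dotv (P0 P1 Q0 Q1 : point) : R :=
  (fst P1 - fst P0) * (fst Q1 - fst Q0) + (snd P1 - snd P0) * (snd Q1 - snd Q0).

Definition orient (P Q S : point) : R :=
  (fst Q - fst P) * (snd S - snd P) - (snd Q - snd P) * (fst S - fst P).

Definition angle (P Q S : point) : R :=
  acos (dotv Q P Q S / (edist P Q * edist S Q)).

Definition on_circle (O : point) (r : R) (P : point) : Prop := edist O P = r.

Definition collinear (P Q X : point) : Prop := orient P Q X = 0.

(* B' is the midpoint of the arc CA of the circle (O,r) not containing B: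
   on the circle, equidistant from C and A, on the other side of line CA than B *)
Definition arc_midpoint_not_containing (O : point) (r : R) (C A B B' : point) : Prop :=
  on_circle O r B' /\ edist B' C = edist B' A /\ orient C A B' * orient C A B < 0.

(* D lies on the (closed) minor arc XY of the circle (O,r):
   on the circle and not strictly on the same side of line XY as the center *)
Definition on_minor_arc (O : point) (r : R) (X Y D : point) : Prop :=
  on_circle O r D /\ orient X Y D * orient X Y O <= 0.

Definition convex_quad (P Q S T : point) : Prop :=
  (0 < orient P Q S /\ 0 < orient Q S T /\ 0 < orient S T P /\ 0 < orient T P Q) \/
  (orient P Q S < 0 /\ orient Q S T < 0 /\ orient S T P < 0 /\ orient T P Q < 0).

(* Tangential quadrilateral, via the characterization given in the context:
   a convex quadrilateral ABCD has an incircle iff AB + CD = BC + DA. *)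
Definition tangential_quad (P Q S T : point) : Prop :=
  convex_quad P Q S T /\ edist P Q + edist S T = edist Q S + edist T P.

(* Main.v *)
Require Import Defs.
From Stdlib Require Import Reals Lra Nsatz.
Open Scope R_scope.
Ltac ns := simpl pow in *; nsatz.
Lemma sqrt_sq_eq x y : 0 <= y -> x = y^2 -> sqrt x = y.
Proof. intros Hy ->. apply sqrt_pow2; auto. Qed.
Definition H (c s : R) : point := (c^2 - s^2, 2*c*s).

Lemma edist_H c1 s1 c2 s2 : c1^2+s1^2=1 -> c2^2+s2^2=1 ->
  edist (H c1 s1) (H c2 s2) = 2 * Rabs (s1*c2 - c1*s2).
Proof.
  intros h1 h2. unfold edist, H; simpl. apply sqrt_sq_eq.
  - pose proof (Rabs_pos (s1*c2 - c1*s2)); lra.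
  - rewrite Rpow_mult_distr, pow2_abs. ns.
Qed.

Lemma circ_iff P : on_circle (0,0) 1 P <-> fst P ^2 + snd P ^2 = 1.
Proof.
  destruct P as [x y]; unfold on_circle, edist; cbn [fst snd]. split.
  - intro h. assert (hh : 0 <= (0-x)^2 + (0-y)^2) by (apply Rplus_le_le_0_compat; apply pow2_ge_0).
    assert (hu : (0-x)^2 + (0-y)^2 = 1) by (rewrite <- (pow2_sqrt _ hh), h; ring).
    lra.
  - intro h. apply sqrt_sq_eq; [lra|]. ring_simplify. lra.
Qed.

Lemma param X Y : X^2 + Y^2 = 1 -> exists c s, c^2+s^2 = 1 /\ X = c^2 - s^2 /\ Y = 2*c*s
  /\ 0 <= s /\ (0 <= Y -> 0 <= c).
Proof.
  intro h.
  assert (hX : -1 <= X <= 1) by (split; nra).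
  assert (h1 : 0 <= (1+X)/2) by lra. assert (h2 : 0 <= (1-X)/2) by lra.
  pose proof (pow2_sqrt _ h1) as e1. pose proof (pow2_sqrt _ h2) as e2.
  assert (hp : sqrt ((1+X)/2) * sqrt ((1-X)/2) = Rabs Y / 2).
  { rewrite <- sqrt_mult by lra. apply sqrt_sq_eq.
    - pose proof (Rabs_pos Y); lra.
    - replace ((Rabs Y / 2)^2) with ((Rabs Y)^2/4) by field. rewrite pow2_abs. field_simplify. nra. }
  destruct (Rle_dec 0 Y) as [hY|hY].
  - exists (sqrt ((1+X)/2)), (sqrt ((1-X)/2)). repeat split.
    + rewrite e1, e2. lra.
    + rewrite e1, e2. lra.
    + rewrite Rmult_assoc, hp, Rabs_pos_eq by lra. lra.
    + apply sqrt_pos.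
    + intros _; apply sqrt_pos.
  - exists (- sqrt ((1+X)/2)), (sqrt ((1-X)/2)). repeat split.
    + replace ((- sqrt ((1 + X) / 2))^2) with (sqrt ((1+X)/2)^2) by ring. rewrite e1, e2. lra.
    + replace ((- sqrt ((1 + X) / 2))^2) with (sqrt ((1+X)/2)^2) by ring. rewrite e1, e2. lra.
    + replace (2 * - sqrt ((1 + X) / 2) * sqrt ((1 - X) / 2)) with (-(2 * (sqrt ((1 + X) / 2) * sqrt ((1 - X) / 2)))) by ring.
      rewrite hp, Rabs_left by lra. lra.
    + apply sqrt_pos.
    + intro; lra.
Qed.

Lemma half_sin x : -1 <= x <= 1 -> sin (acos x / 2) = sqrt ((1-x)/2).
Proof.
  intro hx. pose proof (acos_bound x) as hb. pose proof (cos_acos x hx) as hc.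
  set (t := acos x) in *. symmetry. apply sqrt_sq_eq.
  - apply sin_ge_0; lra.
  - assert (cos (2*(t/2)) = 1 - 2*sin(t/2)*sin(t/2)) by apply cos_2a_sin.
    replace (2*(t/2)) with t in H0 by field. lra.
Qed.

Lemma half_cos x : -1 <= x <= 1 -> cos (acos x / 2) = sqrt ((1+x)/2).
Proof.
  intro hx. pose proof (acos_bound x) as hb. pose proof (cos_acos x hx) as hc.
  set (t := acos x) in *. symmetry. apply sqrt_sq_eq.
  - pose proof PI_RGT_0. apply cos_ge_0; lra.
  - assert (cos (2*(t/2)) = 2*cos(t/2)*cos(t/2) - 1) by apply cos_2a_cos.
    replace (2*(t/2)) with t in H0 by field. lra.
Qed.

Lemma Rabs_eq_pos x y : 0 <= y -> (x = y \/ x = -y) -> Rabs x = y.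
Proof. intros hy [->| ->]; [apply Rabs_pos_eq; auto| rewrite Rabs_Ropp; apply Rabs_pos_eq; auto]. Qed.

Lemma H_circ c s : c^2+s^2 = 1 -> on_circle (0,0) 1 (H c s).
Proof. intro h. apply circ_iff. unfold H; cbn [fst snd]. ns. Qed.

Lemma Bp_H : ((1,0) : point) = H 1 0.
Proof. unfold H. f_equal; ring. Qed.

Lemma prod_pos_sum x y : 0 < x*y -> 0 <= x + y -> 0 < x /\ 0 < y.
Proof. intros. destruct (Rlt_dec 0 x); destruct (Rlt_dec 0 y); try (split; auto); nra. Qed.

Theorem core (A B C E F : point)
  (hA : on_circle (0,0) 1 A) (hB : on_circle (0,0) 1 B) (hC : on_circle (0,0) 1 C)
  (hAB : A <> B) (hBC : B <> C) (hCA : C <> A)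
  (hlen : edist A B > edist B C)
  (hB'1 : edist (1,0) C = edist (1,0) A) (hB'2 : orient C A (1,0) * orient C A B < 0)
  (hCy : 0 < snd C)
  (hE : on_circle (0,0) 1 E) (hEB' : E <> (1,0)) (hEperp : dotv (1,0) E A B = 0)
  (hF1 : dotv A F A E = 0) (hF2 : collinear E (1,0) F) :
  let a := angle B A C in
  let b := angle A B C in
  let c := angle A C B in
  let val := 2 * 1 * sin ((c - a) / 2) * tan (b / 2) in
  edist F A = val /\
  (forall D : point, on_minor_arc (0,0) 1 C (1,0) D ->
     (edist A B + edist C D = edist B C + edist D A <-> edist D (1,0) = val)) /\
  (exists D : point, on_minor_arc (0,0) 1 C (1,0) D /\ edist D (1,0) = edist F A) /\
  (forall D : point, on_minor_arc (0,0) 1 C (1,0) D -> edist D (1,0) = edist F A ->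
     tangential_quad A B C D).
Proof.
  intros a b c val.
  destruct C as [xc yc]. apply circ_iff in hC; cbn [fst snd] in hC, hCy.
  destruct (param _ _ hC) as [cb [sb [ub [exc [eyc [hsb hcb]]]]]]. subst xc yc.
  assert (sbp : 0 < sb) by nra. assert (cbp : 0 < cb) by nra.
  destruct A as [xa ya]. apply circ_iff in hA; cbn [fst snd] in hA.
  assert (hxa : xa = cb^2 - sb^2).
  { unfold edist in hB'1; cbn [fst snd] in hB'1.
    apply sqrt_inj in hB'1; try (apply Rplus_le_le_0_compat; apply pow2_ge_0). nra. }
  subst xa.
  assert (hya : ya = - (2*cb*sb)).
  { assert (hh : (ya - 2*cb*sb)*(ya + 2*cb*sb) = 0) by nra.
    apply Rmult_integral in hh. destruct hh as [hh|hh]; [|lra].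
    exfalso. apply hCA. f_equal. lra. }
  subst ya.
  replace (cb ^ 2 - sb ^ 2, - (2 * cb * sb)) with (H cb (-sb)) in * by (unfold H; f_equal; ring).
  change (cb ^ 2 - sb ^ 2, 2 * cb * sb) with (H cb sb) in *.
  destruct B as [xb yb]. apply circ_iff in hB; cbn [fst snd] in hB.
  destruct (param _ _ hB) as [cB [sB [uB [exb [eyb [hsB hcB]]]]]]. subst xb yb.
  change (cB ^ 2 - sB ^ 2, 2 * cB * sB) with (H cB sB) in *.
  destruct E as [xe ye]. apply circ_iff in hE; cbn [fst snd] in hE.
  destruct (param _ _ hE) as [cE [sE [uE [exe [eye [hsE hcE]]]]]]. subst xe ye.
  change (cE ^ 2 - sE ^ 2, 2 * cE * sE) with (H cE sE) in *.
  rewrite Bp_H in *.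
  assert (ua : cb^2 + (-sb)^2 = 1) by nra.
  assert (u1 : 1^2 + 0^2 = 1) by ring.
  assert (o1 : orient (H cb sb) (H cb (-sb)) (H 1 0) = 8*sb^3*cb) by (clear - ub; unfold orient, H; cbn [fst snd]; ns).
  set (m1 := sB*cb - cB*sb). set (m2 := sB*cb + cB*sb).
  assert (o2 : orient (H cb sb) (H cb (-sb)) (H cB sB) = -8*sb*cb*m1*m2)
    by (clear - ub uB; unfold orient, H, m1, m2; cbn [fst snd]; ns).
  rewrite o1, o2 in hB'2.
  assert (hm12 : 0 < m1*m2).
  { assert (hP : 0 < sb^3*cb*sb*cb) by (apply Rmult_lt_0_compat; [|lra]; apply Rmult_lt_0_compat; [|lra]; apply Rmult_lt_0_compat; [|lra]; apply pow_lt; lra).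
    assert (hq : -64 * (sb^3*cb*sb*cb) * (m1*m2) < 0) by (eapply Rle_lt_trans; [|exact hB'2]; right; ring).
    destruct (Rle_dec (m1*m2) 0) as [hn|]; [|lra]. exfalso.
    assert (0 <= (sb^3*cb*sb*cb) * -(m1*m2)) by (apply Rmult_le_pos; lra). lra. }
  assert (hm1 : 0 < m1 /\ 0 < m2).
  { assert (hs : m1 + m2 = 2*sB*cb) by (unfold m1, m2; ring).
    assert (0 <= sB*cb) by (apply Rmult_le_pos; lra).
    apply prod_pos_sum; [auto | lra]. }
  destruct hm1 as [hm1 hm2].
  assert (dAB : edist (H cb (-sb)) (H cB sB) = 2*m2).
  { rewrite edist_H by auto. f_equal. apply Rabs_eq_pos; [lra|]. right. unfold m2; ring. }
  assert (dBC : edist (H cB sB) (H cb sb) = 2*m1).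
  { rewrite edist_H by auto. f_equal. apply Rabs_eq_pos; [lra|]. left. unfold m1; ring. }
  rewrite dAB, dBC in hlen.
  assert (cBp : 0 < cB) by (unfold m1, m2 in hlen; nra).
  assert (cbB : cB < cb).
  { destruct (Rlt_dec cB cb) as [|hn]; auto. exfalso.
    assert (sB <= sb) by nra. unfold m1 in hm1. nra. }
  assert (sBp : 0 < sB) by (unfold m1 in hm1; nra).
  assert (sEp : 0 < sE).
  { destruct (Rlt_dec 0 sE) as [|hn]; auto. exfalso. assert (sE = 0) by lra. subst sE.
    assert (0 <= cE) by (apply hcE; lra). assert (cE = 1) by nra. subst cE. apply hEB'. reflexivity. }
  set (ga := cB*cb + sB*sb).
  assert (dv : dotv (H 1 0) (H cE sE) (H cb (-sb)) (H cB sB) = 4*sE*m2*(cE*ga + sE*m1))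
    by (clear - uE uB ub; unfold dotv, H, m1, m2, ga; cbn [fst snd]; ns).
  rewrite dv in hEperp.
  assert (kap : cE*ga + sE*m1 = 0).
  { assert (hne : 4*sE*m2 <> 0) by (apply Rmult_integral_contrapositive; split; [|lra];
      apply Rmult_integral_contrapositive; split; lra).
    apply Rmult_integral in hEperp. destruct hEperp as [hh|hh]; [contradiction|exact hh]. }
  set (w := sE*cb + cE*sb).
  assert (w2 : w^2 = cB^2) by (clear - uE uB ub kap; unfold w, ga, m1 in *; ns).
  assert (wne : w <> 0) by (intro hw; rewrite hw in w2; nra).
  destruct F as [f1 f2].
  unfold collinear, orient in hF2; unfold dotv in hF1; unfold H in hF1, hF2; cbn [fst snd] in hF1, hF2.
  assert (det1 : (4*sE*w*cb)*(cb*f1 - (cb + 2*sb*cE*sE)) = 0)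
    by (clear - hF1 hF2 uE ub; unfold w; ns).
  assert (det2 : (4*sE*w*cb)*(cb*f2 - (-2*sb*cE^2)) = 0)
    by (clear - hF1 hF2 uE ub; unfold w; ns).
  assert (detne : 4*sE*w*cb <> 0).
  { apply Rmult_integral_contrapositive; split; [|lra].
    apply Rmult_integral_contrapositive; split; [|auto].
    apply Rmult_integral_contrapositive; split; lra. }
  assert (ef1 : cb*f1 = cb + 2*sb*cE*sE).
  { apply Rmult_integral in det1. destruct det1 as [hh|hh]; [contradiction|lra]. }
  assert (ef2 : cb*f2 = -2*sb*cE^2).
  { apply Rmult_integral in det2. destruct det2 as [hh|hh]; [contradiction|lra]. }
  set (V := 2*cB*sb/cb).
  assert (Vpos : 0 < V) by (unfold V; apply Rdiv_lt_0_compat; [nra|lra]).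
  assert (FA : edist (f1,f2) (H cb (-sb)) = V).
  { unfold edist, H; cbn [fst snd]. apply sqrt_sq_eq; [lra|].
    apply (Rmult_eq_reg_l (cb^2)); [|apply pow_nonzero; lra].
    transitivity (4*cB^2*sb^2).
    - clear - ef1 ef2 kap uE uB ub. unfold ga, m1 in *. ns.
    - unfold V. field. lra. }
  set (gc := cB*cb - sB*sb).
  assert (dAC : edist (H cb sb) (H cb (-sb)) = 4*sb*cb).
  { rewrite edist_H by auto. replace (4*sb*cb) with (2*(2*sb*cb)) by ring. f_equal. apply Rabs_eq_pos; [nra|]. left. ring. }
  assert (dBA : edist (H cB sB) (H cb (-sb)) = 2*m2).
  { rewrite edist_H by auto. f_equal. apply Rabs_eq_pos; [lra|]. left. unfold m2; ring. }
  assert (dCB : edist (H cb sb) (H cB sB) = 2*m1).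
  { rewrite edist_H by auto. f_equal. apply Rabs_eq_pos; [lra|]. right. unfold m1; ring. }
  assert (dAC' : edist (H cb (-sb)) (H cb sb) = 4*sb*cb).
  { rewrite edist_H by auto. replace (4*sb*cb) with (2*(2*sb*cb)) by ring. f_equal. apply Rabs_eq_pos; [nra|]. right. ring. }
  assert (ea : a = acos ga).
  { unfold a, angle. replace (cb ^ 2 - sb ^ 2, - (2 * cb * sb)) with (H cb (-sb)) by (unfold H; f_equal; ring). f_equal. rewrite dBA, dAC.
    assert (dd : dotv (H cb (-sb)) (H cB sB) (H cb (-sb)) (H cb sb) = 8*m2*sb*cb*ga)
      by (clear - uB ub; unfold dotv, H, m2, ga; cbn [fst snd]; ns).
    rewrite dd. field. split; lra. }
  assert (eb : b = acos (cb^2 - sb^2)).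
  { unfold b, angle. replace (cb ^ 2 - sb ^ 2, - (2 * cb * sb)) with (H cb (-sb)) by (unfold H; f_equal; ring). f_equal. rewrite dAB, dCB.
    assert (dd : dotv (H cB sB) (H cb (-sb)) (H cB sB) (H cb sb) = 4*m1*m2*(cb^2-sb^2))
      by (clear - uB ub; unfold dotv, H, m1, m2; cbn [fst snd]; ns).
    rewrite dd. field. split; lra. }
  assert (ec : c = acos (- gc)).
  { unfold c, angle. replace (cb ^ 2 - sb ^ 2, - (2 * cb * sb)) with (H cb (-sb)) by (unfold H; f_equal; ring). f_equal. rewrite dAC', dBC.
    assert (dd : dotv (H cb sb) (H cb (-sb)) (H cb sb) (H cB sB) = -8*sb*cb*m1*gc)
      by (clear - uB ub; unfold dotv, H, m1, gc; cbn [fst snd]; ns).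
    rewrite dd. field. split; lra. }
  assert (ga2 : ga^2 + m1^2 = 1) by (clear - uB ub; unfold ga, m1; ns).
  assert (gc2 : gc^2 + m2^2 = 1) by (clear - uB ub; unfold gc, m2; ns).
  assert (bga : -1 <= ga <= 1) by (split; nra).
  assert (bgc : -1 <= - gc <= 1) by (split; nra).
  assert (bgb : -1 <= cb^2 - sb^2 <= 1) by (split; nra).
  assert (hval : val = V).
  { unfold val. replace ((c - a)/2) with (c/2 - a/2) by field.
    rewrite sin_minus. unfold tan. rewrite ea, eb, ec.
    rewrite !half_sin, !half_cos by auto.
    assert (p1 : sqrt ((1 - - gc)/2) * sqrt ((1 + ga)/2) = (cb + cB)/2).
    { rewrite <- sqrt_mult by lra. apply sqrt_sq_eq; [lra|].
      assert (pp : (1+gc)*(1+ga) = (cb+cB)^2) by (clear - uB ub; unfold gc, ga; ns).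
      replace ((1 - - gc)/2 * ((1+ga)/2)) with ((1+gc)*(1+ga)/4) by field.
      rewrite pp. field. }
    assert (p2 : sqrt ((1 + - gc)/2) * sqrt ((1 - ga)/2) = (cb - cB)/2).
    { rewrite <- sqrt_mult by lra. apply sqrt_sq_eq; [lra|].
      assert (pp : (1-gc)*(1-ga) = (cb-cB)^2) by (clear - uB ub; unfold gc, ga; ns).
      replace ((1 + - gc)/2 * ((1-ga)/2)) with ((1-gc)*(1-ga)/4) by field.
      rewrite pp. field. }
    assert (p3 : sqrt ((1 - (cb^2 - sb^2))/2) = sb).
    { apply sqrt_sq_eq; lra. }
    assert (p4 : sqrt ((1 + (cb^2 - sb^2))/2) = cb).
    { apply sqrt_sq_eq; lra. }
    rewrite p1, p2, p3, p4. unfold V. field. lra. }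
  assert (Dfacts : forall D, on_minor_arc (0,0) 1 (H cb sb) (H 1 0) D ->
    exists cD sD, D = H cD sD /\ cD^2+sD^2=1 /\ 0 <= sD /\ 0 <= cD /\ 0 <= cD*sb - sD*cb /\
      edist (H cb sb) D = 2*(cD*sb - sD*cb) /\ edist D (H cb (-sb)) = 2*(sD*cb + cD*sb) /\
      edist D (H 1 0) = 2*sD).
  { intros [xd yd] [hD hor]. apply circ_iff in hD; cbn [fst snd] in hD.
    destruct (param _ _ hD) as [cD [sD [uD [exd [eyd [hsD hcD]]]]]]. subst xd yd.
    change (cD ^ 2 - sD ^ 2, 2 * cD * sD) with (H cD sD) in *.
    assert (q1 : orient (H cb sb) (H 1 0) (H cD sD) = -4*sb*sD*(sD*cb - cD*sb))
      by (clear - ub uD; unfold orient, H; cbn [fst snd]; ns).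
    assert (q2 : orient (H cb sb) (H 1 0) (0,0) = -2*cb*sb)
      by (clear - ub uD; unfold orient, H; cbn [fst snd]; ns).
    rewrite q1, q2 in hor.
    assert (hn : sD*(sD*cb - cD*sb) <= 0).
    { assert (hP : 0 < 8*cb*sb*sb) by (apply Rmult_lt_0_compat; [|lra]; apply Rmult_lt_0_compat; lra).
      assert (hh : (8*cb*sb*sb) * (sD*(sD*cb - cD*sb)) <= 0) by (eapply Rle_trans; [|exact hor]; right; ring).
      destruct (Rle_dec (sD*(sD*cb - cD*sb)) 0) as [|hn]; auto. exfalso.
      assert (0 < (8*cb*sb*sb) * (sD*(sD*cb - cD*sb))) by (apply Rmult_lt_0_compat; lra). lra. }
    assert (hcs : 0 <= cD /\ 0 <= cD*sb - sD*cb).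
    { destruct (Req_dec sD 0) as [h0|h0].
      - subst sD. assert (0 <= cD) by (apply hcD; lra). assert (cD = 1) by nra. subst cD. split; lra.
      - assert (0 < sD) by lra.
        assert (hh : 0 <= cD*sb - sD*cb).
        { destruct (Rle_dec 0 (cD*sb - sD*cb)) as [|hn2]; auto. exfalso.
          assert (0 < sD*(sD*cb - cD*sb)) by (apply Rmult_lt_0_compat; lra). lra. }
        split; [|auto]. assert (0 < sD*cb) by (apply Rmult_lt_0_compat; lra). nra. }
    destruct hcs as [hcD0 hn1].
    exists cD, sD. repeat split; auto.
    - rewrite edist_H by auto. f_equal. apply Rabs_eq_pos; [lra|]. left; ring.
    - rewrite edist_H by auto. f_equal. apply Rabs_eq_pos; [apply Rplus_le_le_0_compat; apply Rmult_le_pos; lra|]. left; ring.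
    - rewrite edist_H by auto. f_equal. apply Rabs_eq_pos; [lra|]. left; ring. }
  assert (P2 : forall D : point, on_minor_arc (0,0) 1 (H cb sb) (H 1 0) D ->
     (edist (H cb (-sb)) (H cB sB) + edist (H cb sb) D = edist (H cB sB) (H cb sb) + edist D (H cb (-sb))
       <-> edist D (H 1 0) = val)).
  { intros D hD. destruct (Dfacts D hD) as [cD [sD [-> [uD [hsD [hcD [hn1 [e1 [e2 e3]]]]]]]]].
    rewrite dAB, dBC, e1, e2, e3, hval. unfold V. split; intro hh.
    - assert (sD*cb = cB*sb) by (unfold m1, m2 in hh; lra).
      apply (Rmult_eq_reg_l cb); [|lra]. field_simplify; [|lra]. lra.
    - assert (hh' : sD*cb = cB*sb).
      { apply (Rmult_eq_reg_l 2); [|lra]. rewrite <- (Rmult_1_r (2*(sD*cb))).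
        replace (2*(cB*sb)) with (2*cB*sb/cb*cb) by (field; lra). rewrite <- hh. field. }
      unfold m1, m2. lra. }
  split; [rewrite hval; exact FA|].
  split; [exact P2|].
  split.
  -
    set (sD := cB*sb/cb).
    assert (sDp : 0 < sD) by (unfold sD; apply Rdiv_lt_0_compat; [nra|lra]).
    assert (hr1 : 1 - sD^2 - cB^2 = (cb^2 - cB^2)/cb^2).
    { clear - ub cbp. unfold sD. clear sD. field_simplify_eq; [ | apply Rgt_not_eq; lra]; clear cbp; ns. }
    assert (hr2 : 0 < (cb^2 - cB^2)/cb^2) by (apply Rdiv_lt_0_compat; nra).
    set (cD := sqrt (1 - sD^2)).
    assert (ecD : cD^2 = 1 - sD^2) by (unfold cD; apply pow2_sqrt; nra).
    assert (cDB : cB <= cD).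
    { unfold cD. rewrite <- (sqrt_pow2 cB) by lra. pose proof (pow2_ge_0 cB). apply sqrt_le_1; lra. }
    assert (uD : cD^2 + sD^2 = 1) by lra.
    exists (H cD sD). split.
    + split; [apply H_circ; auto|].
      assert (q1 : orient (H cb sb) (H 1 0) (H cD sD) = -4*sb*sD*(sD*cb - cD*sb))
        by (clear - ub uD; unfold orient, H; cbn [fst snd]; ns).
      assert (q2 : orient (H cb sb) (H 1 0) (0,0) = -2*cb*sb)
        by (clear - ub uD; unfold orient, H; cbn [fst snd]; ns).
      rewrite q1, q2.
      assert (hh : sD*cb = cB*sb) by (unfold sD; field; lra).
      assert (hh2 : 0 <= cD*sb - sD*cb) by (rewrite hh; replace (cD*sb - cB*sb) with (sb*(cD-cB)) by ring; apply Rmult_le_pos; lra).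
      replace (-4*sb*sD*(sD*cb - cD*sb) * (-2*cb*sb)) with (-(8*sb*sD*cb*sb*(cD*sb - sD*cb))) by ring.
      assert (0 <= 8*sb*sD*cb*sb*(cD*sb - sD*cb)); [|lra].
      assert (0 < 8*sb*sD*cb*sb) by (apply Rmult_lt_0_compat; [|lra]; apply Rmult_lt_0_compat; [|lra]; apply Rmult_lt_0_compat; [|lra]; lra).
      apply Rmult_le_pos; lra.
    + rewrite FA. rewrite edist_H by auto. unfold V.
      replace (sD*1 - cD*0) with sD by ring. rewrite Rabs_pos_eq by lra. unfold sD. field. lra.
  -
    intros D hD hDB. pose proof (P2 D hD) as hiff.
    destruct (Dfacts D hD) as [cD [sD [eD [uD [hsD [hcD [hn1 [e1 [e2 e3]]]]]]]]].
    rewrite FA in hDB. rewrite e3 in hDB.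
    assert (hs : sD*cb = cB*sb).
    { unfold V in hDB. apply (Rmult_eq_reg_l 2); [|lra]. replace (2*(sD*cb)) with ((2*sD)*cb) by ring.
      rewrite hDB. field. lra. }
    split; [|apply hiff; rewrite e3, hval; exact hDB].
    subst D.
    assert (sDp : 0 < sD).
    { destruct (Req_dec sD 0) as [h0|h0]; [|lra]. exfalso. rewrite h0 in hs.
      assert (0 < cB*sb) by (apply Rmult_lt_0_compat; lra). lra. }
    assert (cDB : cB < cD).
    { assert (hq : cb^2*(cD^2 - cB^2) = cb^2 - cB^2).
      { clear - hs uD ub. ns. }
      assert (0 < cD^2 - cB^2).
      { assert (0 < cb^2 - cB^2) by (replace (cb^2 - cB^2) with ((cb-cB)*(cb+cB)) by ring; apply Rmult_lt_0_compat; lra).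
        assert (0 < cb^2) by (apply pow_lt; lra).
        destruct (Rlt_dec 0 (cD^2 - cB^2)); auto. exfalso.
        assert (0 <= cb^2 * -(cD^2 - cB^2)) by (apply Rmult_le_pos; lra). lra. }
      destruct (Rlt_dec cB cD) as [|hn]; auto. exfalso.
      assert (cD^2 <= cB^2) by (apply pow_incr; lra). lra. }
    assert (n1p : 0 < cD*sb - sD*cb).
    { replace (cD*sb - sD*cb) with (sb*(cD-cB)) by (rewrite hs; ring). apply Rmult_lt_0_compat; lra. }
    assert (n2p : 0 < sD*cb + cD*sb).
    { assert (0 < sD*cb) by (apply Rmult_lt_0_compat; lra). assert (0 < cD*sb) by (apply Rmult_lt_0_compat; lra). lra. }
    assert (kp : 0 < sB*cD - cB*sD).
    { assert (e : cb*(sB*cD - cB*sD) = sB*cb*(cD-cB) + cB*m1).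
      { unfold m1. replace (cb*(sB*cD - cB*sD)) with (sB*cD*cb - cB*(sD*cb)) by ring. rewrite hs. ring. }
      assert (0 < sB*cb*(cD-cB)) by (repeat apply Rmult_lt_0_compat; lra).
      assert (0 < cB*m1) by (apply Rmult_lt_0_compat; lra).
      destruct (Rlt_dec 0 (sB*cD - cB*sD)) as [|hn]; auto. exfalso.
      assert (0 <= cb * -(sB*cD - cB*sD)) by (apply Rmult_le_pos; lra). lra. }
    right. repeat split.
    + assert (ho : orient (H cb (-sb)) (H cB sB) (H cb sb) = -8*(m2*sb*cb*m1)) by (clear - uB ub; unfold orient, H, m1, m2; cbn [fst snd]; ns). rewrite ho.
      assert (0 < m2*sb*cb*m1) by (repeat apply Rmult_lt_0_compat; lra). lra.
    + assert (ho : orient (H cB sB) (H cb sb) (H cD sD) = -4*(m1*(cD*sb - sD*cb)*(sB*cD - cB*sD))) by (clear - uB ub uD; unfold orient, H, m1; cbn [fst snd]; ns). rewrite ho.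
      assert (0 < m1*(cD*sb - sD*cb)*(sB*cD - cB*sD)) by (repeat apply Rmult_lt_0_compat; lra). lra.
    + assert (ho : orient (H cb sb) (H cD sD) (H cb (-sb)) = -8*((cD*sb - sD*cb)*sb*cb*(sD*cb + cD*sb))) by (clear - uB ub uD; unfold orient, H; cbn [fst snd]; ns). rewrite ho.
      assert (0 < (cD*sb - sD*cb)*sb*cb*(sD*cb + cD*sb)) by (repeat apply Rmult_lt_0_compat; lra). lra.
    + assert (ho : orient (H cD sD) (H cb (-sb)) (H cB sB) = -4*((sD*cb + cD*sb)*(sB*cD - cB*sD)*m2)) by (clear - uB ub uD; unfold orient, H, m2; cbn [fst snd]; ns). rewrite ho.
      assert (0 < (sD*cb + cD*sb)*(sB*cD - cB*sD)*m2) by (repeat apply Rmult_lt_0_compat; lra). lra.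
Qed.

Section Frame.
Variables (O : point) (r k1 k2 e : R).
Hypothesis hr : 0 < r.
Hypothesis hk : k1^2 + k2^2 = 1.
Hypothesis he : e*e = 1.

Definition emb (P : point) : point :=
  (fst O + r*(k1*fst P - e*k2*snd P), snd O + r*(k2*fst P + e*k1*snd P)).
Definition Tr (P : point) : point :=
  ((k1*(fst P - fst O) + k2*(snd P - snd O)) * / r,
   e*(-k2*(fst P - fst O) + k1*(snd P - snd O)) * / r).

Lemma emb_T P : emb (Tr P) = P.
Proof.
  destruct P as [x y]; unfold emb, Tr; simpl.
  assert (hi : r * / r = 1) by (field; lra).
  f_equal; ns.
Qed.

Lemma edist_emb P Q : edist (emb P) (emb Q) = r * edist P Q.
Proof.
  destruct P as [x y]; destruct Q as [u v]; unfold edist, emb; simpl.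
  match goal with |- sqrt ?a = r * sqrt ?b => replace a with (r^2 * b) by ns end.
  rewrite sqrt_mult, sqrt_pow2; [ring|lra|apply pow2_ge_0|apply Rplus_le_le_0_compat; apply pow2_ge_0].
Qed.

Lemma edist_emb0 P : edist O (emb P) = r * edist (0,0) P.
Proof.
  destruct P as [x y]; unfold edist, emb; simpl.
  match goal with |- sqrt ?a = r * sqrt ?b => replace a with (r^2 * b) by ns end.
  rewrite sqrt_mult, sqrt_pow2; [ring|lra|apply pow2_ge_0|apply Rplus_le_le_0_compat; apply pow2_ge_0].
Qed.

Lemma dotv_emb P0 P1 Q0 Q1 :
  dotv (emb P0) (emb P1) (emb Q0) (emb Q1) = r^2 * dotv P0 P1 Q0 Q1.
Proof. unfold dotv, emb; simpl. ns. Qed.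

Lemma orient_emb P Q S : orient (emb P) (emb Q) (emb S) = e * r^2 * orient P Q S.
Proof. unfold orient, emb; simpl. ns. Qed.

Lemma orient_emb0 P Q : orient (emb P) (emb Q) O = e * r^2 * orient P Q (0,0).
Proof. unfold orient, emb; simpl. ns. Qed.

Lemma angle_emb P Q S : angle (emb P) (emb Q) (emb S) = angle P Q S.
Proof.
  unfold angle. rewrite dotv_emb, !edist_emb. f_equal.
  destruct (Req_dec (edist P Q * edist S Q) 0) as [h|h].
  - replace (r * edist P Q * (r * edist S Q)) with (r^2 * (edist P Q * edist S Q)) by ring.
    rewrite h, Rmult_0_r. unfold Rdiv. rewrite Rinv_0. ring.
  - field. repeat split; try lra; intro hh; apply h; nra.
Qed.

Lemma Tr_B' : r^2 = r^2 -> Tr (fst O + r*k1, snd O + r*k2) = (1,0).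
Proof. intros _. unfold Tr; simpl. f_equal.
  - match goal with |- ?a * _ = _ => replace a with (r*(k1^2+k2^2)) by ring end.
    rewrite hk. field. lra.
  - match goal with |- ?a * _ = _ => replace a with 0 by ring end. ring.
Qed.
End Frame.

Section Frame2.
Variables (O : point) (r k1 k2 e : R).
Hypothesis hr : 0 < r.
Hypothesis hk : k1^2 + k2^2 = 1.
Hypothesis he : e*e = 1.
Let emb := emb O r k1 k2 e.

Lemma circ_emb P : on_circle O r (emb P) <-> on_circle (0,0) 1 P.
Proof.
  unfold on_circle, emb. rewrite edist_emb0 by auto. split; intro h.
  - apply (Rmult_eq_reg_l r); lra.
  - rewrite h; ring.
Qed.

Lemma minor_emb C P D : on_minor_arc O r (emb C) (emb P) (emb D) <-> on_minor_arc (0,0) 1 C P D.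
Proof.
  unfold on_minor_arc. rewrite circ_emb. unfold emb. rewrite orient_emb, orient_emb0 by auto.
  replace (e * r ^ 2 * orient C P D * (e * r ^ 2 * orient C P (0, 0)))
    with ((e*e) * (r^2*r^2) * (orient C P D * orient C P (0,0))) by ring.
  rewrite he. assert (0 < r^2*r^2) by (apply Rmult_lt_0_compat; apply pow_lt; lra).
  split; intros [h1 h2]; split; try exact h1.
  - destruct (Rle_dec (orient C P D * orient C P (0,0)) 0) as [|hn]; auto. exfalso.
    assert (0 < r^2*r^2 * (orient C P D * orient C P (0,0))) by (apply Rmult_lt_0_compat; lra). lra.
  - assert (0 <= r^2*r^2 * -(orient C P D * orient C P (0,0))) by (apply Rmult_le_pos; lra). lra.
Qed.

Lemma convex_emb P Q S T : convex_quad (emb P) (emb Q) (emb S) (emb T) <-> convex_quad P Q S T.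
Proof.
  unfold convex_quad, emb. rewrite !orient_emb by auto.
  assert (hr2 : 0 < r^2) by (apply pow_lt; lra).
  assert (hee : e = 1 \/ e = -1).
  { assert (hm : (e-1)*(e+1) = 0) by (ring_simplify; lra). apply Rmult_integral in hm. lra. }
  assert (pos : forall x, 0 < e*r^2*x <-> 0 < e*x).
  { intro x. split; intro h.
    - destruct (Rle_dec (e*x) 0) as [hn|]; [exfalso|lra].
      assert (0 <= r^2 * -(e*x)) by (apply Rmult_le_pos; lra). lra.
    - assert (0 < r^2*(e*x)) by (apply Rmult_lt_0_compat; lra). lra. }
  assert (neg : forall x, e*r^2*x < 0 <-> e*x < 0).
  { intro x. split; intro h.
    - destruct (Rle_dec 0 (e*x)) as [hn|]; [exfalso|lra].
      assert (0 <= r^2 * (e*x)) by (apply Rmult_le_pos; lra). lra.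
    - assert (0 < r^2*-(e*x)) by (apply Rmult_lt_0_compat; lra). lra. }
  rewrite !pos, !neg.
  destruct hee as [-> | ->]; rewrite ?Rmult_1_l; split; intros [h|h]; 
    try (left; lra); try (right; lra).
Qed.

End Frame2.

Lemma Cy_nz (A C : point) : on_circle (0,0) 1 A -> on_circle (0,0) 1 C ->
  edist (1,0) C = edist (1,0) A -> C <> A -> snd C <> 0.
Proof.
  destruct A as [xa ya]; destruct C as [xc yc]. rewrite !circ_iff. cbn [fst snd].
  intros hA hC hd hne hy. subst yc.
  unfold edist in hd; cbn [fst snd] in hd.
  apply sqrt_inj in hd; try (apply Rplus_le_le_0_compat; apply pow2_ge_0).
  assert (xa = xc) by (clear hne; ns). subst xa. assert (hy2 : ya*ya = 0) by (clear hne; ns). apply Rmult_integral in hy2. assert (ya = 0) by (destruct hy2; auto). subst ya. apply hne; reflexivity.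
Qed.

Theorem mainTheorem8 (O A B C B' E F : point) (r : R)
  (hr : 0 < r)
  (hA : on_circle O r A) (hB : on_circle O r B) (hC : on_circle O r C)
  (hAB : A <> B) (hBC : B <> C) (hCA : C <> A)
  (hlen : edist A B > edist B C)
  (hB' : arc_midpoint_not_containing O r C A B B')
  (hE : on_circle O r E) (hEB' : E <> B') (hEperp : dotv B' E A B = 0)
  (hF1 : dotv A F A E = 0) (hF2 : collinear E B' F) :
  let a := angle B A C in
  let b := angle A B C in
  let c := angle A C B in
  let val := 2 * r * sin ((c - a) / 2) * tan (b / 2) in
  edist F A = val /\
  (forall D : point, on_minor_arc O r C B' D ->
     (edist A B + edist C D = edist B C + edist D A <-> edist D B' = val)) /\
  (exists D : point, on_minor_arc O r C B' D /\ edist D B' = edist F A) /\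
  (forall D : point, on_minor_arc O r C B' D -> edist D B' = edist F A ->
     tangential_quad A B C D).
Proof.
  destruct hB' as [hB'c [hB'd hB'o]].
  set (k1 := (fst B' - fst O)/r). set (k2 := (snd B' - snd O)/r).
  assert (hk : k1^2 + k2^2 = 1).
  { unfold on_circle, edist in hB'c.
    assert (hh : 0 <= (fst O - fst B')^2 + (snd O - snd B')^2) by (apply Rplus_le_le_0_compat; apply pow2_ge_0).
    assert (hq : (fst O - fst B')^2 + (snd O - snd B')^2 = r^2) by (rewrite <- (pow2_sqrt _ hh), hB'c; ring).
    unfold k1, k2.
    replace (((fst B' - fst O) / r) ^ 2 + ((snd B' - snd O) / r) ^ 2)
      with (((fst O - fst B')^2 + (snd O - snd B')^2)/r^2) by (field; lra).
    rewrite hq. field. lra. }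
  assert (eB' : forall e, B' = emb O r k1 k2 e (1,0)).
  { intro e. unfold emb, k1, k2; destruct B' as [x y]; cbn [fst snd]. f_equal; field; lra. }
  clearbody k1 k2.
  assert (hCA1 := hCA).
  assert (hex : exists e, e*e = 1 /\ 0 < snd (Tr O r k1 k2 e C)).
  { assert (h11 : 1*1 = 1) by ring.
    pose proof (emb_T O r k1 k2 1 hr hk h11) as ET.
    pose proof (circ_emb O r k1 k2 1 hr hk h11) as CE.
    pose proof (edist_emb O r k1 k2 1 hr hk h11) as DE.
    assert (hy : snd (Tr O r k1 k2 1 C) <> 0).
    { apply (Cy_nz (Tr O r k1 k2 1 A)).
      - rewrite <- CE, ET. auto.
      - rewrite <- CE, ET. auto.
      - apply (Rmult_eq_reg_l r); [|lra].
        rewrite <- !DE, !ET. rewrite <- (eB' 1). auto.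
      - intro h. apply hCA. rewrite <- (ET C), <- (ET A). rewrite h. reflexivity. }
    destruct (Rlt_dec 0 (snd (Tr O r k1 k2 1 C))) as [h|h].
    - exists 1. split; [ring|auto].
    - exists (-1). split; [ring|]. unfold Tr in *; cbn [snd] in *. 
      assert (hy' : (1 * (- k2 * (fst C - fst O) + k1 * (snd C - snd O)) * / r) < 0) by lra.
      replace (-1 * (- k2 * (fst C - fst O) + k1 * (snd C - snd O)) * / r)
        with (- (1 * (- k2 * (fst C - fst O) + k1 * (snd C - snd O)) * / r)) by ring. lra. }
  destruct hex as [e [he hCy]].
  pose proof (emb_T O r k1 k2 e hr hk he) as ET.
  pose proof (circ_emb O r k1 k2 e hr hk he) as CE.
  pose proof (edist_emb O r k1 k2 e hr hk he) as DE.
  pose proof (orient_emb O r k1 k2 e hk he) as OE.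
  pose proof (dotv_emb O r k1 k2 e hk he) as VE.
  pose proof (angle_emb O r k1 k2 e hr hk he) as AE.
  pose proof (minor_emb O r k1 k2 e hr hk he) as ME.
  pose proof (convex_emb O r k1 k2 e hr hk he) as XE.
  rewrite (eB' e) in *. clear eB'.
  assert (req : forall x y, r*x = r*y <-> x = y).
  { intros x y; split; intro h; [apply (Rmult_eq_reg_l r); [exact h|lra] | rewrite h; reflexivity]. }
  assert (hr2 : 0 < r^2) by (apply pow_lt; lra).
  Ltac sbp P :=
    let h := fresh in
    match goal with ET : forall Q, emb ?O ?r ?k1 ?k2 ?e (Tr ?O ?r ?k1 ?k2 ?e Q) = Q |- _ =>
      assert (h : P = emb O r k1 k2 e (Tr O r k1 k2 e P)) by (rewrite ET; reflexivity);
      let P' := fresh P "n" in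
      set (P' := Tr O r k1 k2 e P) in *; clearbody P'; subst P end.
  sbp A. sbp B. sbp C. sbp E. sbp F.
  rewrite CE in hA, hB, hC, hE.
  assert (hAB' : An <> Bn) by (intro h; apply hAB; rewrite h; reflexivity).
  assert (hBC' : Bn <> Cn) by (intro h; apply hBC; rewrite h; reflexivity).
  assert (hCA' : Cn <> An) by (intro h; apply hCA; rewrite h; reflexivity).
  assert (hEB'' : En <> (1,0)) by (intro h; apply hEB'; rewrite h; reflexivity).
  rewrite !DE in hlen. apply Rmult_lt_reg_l in hlen; [|lra].
  rewrite !DE in hB'd. apply (proj1 (req _ _)) in hB'd.
  rewrite !OE in hB'o.
  assert (hB'o' : orient Cn An (1,0) * orient Cn An Bn < 0).
  { replace (e * r ^ 2 * orient Cn An (1, 0) * (e * r ^ 2 * orient Cn An Bn))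
      with ((e*e)*(r^2*r^2)*(orient Cn An (1, 0) * orient Cn An Bn)) in hB'o by ring.
    rewrite he in hB'o.
    destruct (Rlt_dec (orient Cn An (1, 0) * orient Cn An Bn) 0) as [|hn]; auto. exfalso.
    assert (0 <= r^2*r^2*(orient Cn An (1, 0) * orient Cn An Bn)) by (apply Rmult_le_pos; [nra|lra]). lra. }
  rewrite VE in hEperp, hF1.
  assert (hEperp' : dotv (1,0) En An Bn = 0).
  { apply Rmult_integral in hEperp. destruct hEperp; [lra|auto]. }
  assert (hF1' : dotv An Fn An En = 0).
  { apply Rmult_integral in hF1. destruct hF1; [lra|auto]. }
  unfold collinear in hF2. rewrite OE in hF2.
  assert (hF2' : collinear En (1,0) Fn).
  { apply Rmult_integral in hF2. destruct hF2 as [h|h]; auto.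
    apply Rmult_integral in h. exfalso. destruct h; [|lra]. subst e. lra. }
  pose proof (core An Bn Cn En Fn hA hB hC hAB' hBC' hCA' hlen hB'd hB'o' hCy hE hEB'' hEperp' hF1' hF2') as K.
  cbv zeta in K |- *. rewrite !AE.
  destruct K as [K1 [K2 [K3 K4]]].
  split; [rewrite DE, K1; ring|].
  split; [|split].
  - intros D hD. sbp D. rewrite ME in hD. specialize (K2 Dn hD). rewrite !DE.
    match goal with |- (r*?x + r*?y = r*?z + r*?w <-> r*?d = 2*r*?S*?T) =>
      replace (r*x + r*y) with (r*(x+y)) by ring; replace (r*z+r*w) with (r*(z+w)) by ring;
      replace (2*r*S*T) with (r*(2*1*S*T)) by ring end.
    rewrite !req. exact K2.
  - destruct K3 as [Dn [hD hDe]]. exists (emb O r k1 k2 e Dn). split.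
    + apply ME; auto.
    + rewrite !DE, hDe. reflexivity.
  - intros D hD hDB. sbp D. rewrite ME in hD. rewrite !DE in hDB. apply (proj1 (req _ _)) in hDB.
    destruct (K4 Dn hD hDB) as [Kc Ke]. split; [apply XE; auto|].
    rewrite !DE. replace (r * edist An Bn + r * edist Cn Dn) with (r*(edist An Bn + edist Cn Dn)) by ring.
    rewrite Ke. ring.
Qed.
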